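(* For every positive integer $t$, \[ g(3,t)\ge \frac{16t^2+7t+1}{24t^2+15t+3}. \]
   Context: Let $\mathbb{F}$ be a finite field and $x_1,\dots,x_p$ a basis of $\mathbb{F}^p$. A $[t\times m,p]$ array code is a $t\times m$ array whose entries (cells) are linear combinations of $x_1,\dots,x_p$. It has the $k$-PIR property (is a $[t\times m,p]$ $k$-PIR array code) if for every $i\in\{1,\dots,p\}$ there exist $k$ pairwise disjoint sets $S_1,\dots,S_k$ of columns such that for every $j$ the vector $x_i$ lies in the linear span of all entries of the columns in $S_j$. Its PIR rate is $k/m$. For a rational $s>1$ and a positive integer $t$ with $st$ an integer, $g(s,t)$ is the largest PIR rate $k/m$ of a $[t\times m,st]$ $k$-PIR array code (over all finite fields, all $m$ and all $k$). *)

(* Defs.v *)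
From HB Require Import structures.
From mathcomp Require Import all_boot all_order all_algebra all_field.
Set Implicit Arguments. Unset Strict Implicit. Unset Printing Implicit Defensive.
Import GRing.Theory Num.Theory.
Local Open Scope ring_scope.

(* A [t x m, p] array code over F: entry (r, c) is a vector of F^p, namely
   its coordinates w.r.t. the basis x_1..x_p (x_i = delta_mx 0 i). *)
Definition array_code (F : finFieldType) (t m p : nat) :=
  'I_t -> 'I_m -> 'rV[F]_p.

Definition col_span (F : finFieldType) (t m p : nat) (C : array_code F t m p)
  (S : {set 'I_m}) : {vspace 'rV[F]_p} :=
  <<[seq C r c | r <- enum 'I_t, c <- enum S]>>%VS.

Definition is_kPIR (F : finFieldType) (t m p k : nat) (C : array_code F t m p) :=
  forall i : 'I_p, exists S : 'I_k -> {set 'I_m},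
    (forall j j' : 'I_k, j != j' -> [disjoint S j & S j']) /\
    (forall j : 'I_k, (delta_mx 0 i : 'rV[F]_p) \in col_span C (S j)).

(* Main.v *)
Require Import Defs.
From HB Require Import structures.
From mathcomp Require Import all_boot all_order all_algebra all_field all_fingroup.
From mathcomp Require Import zify.
Import GRing.Theory Num.Theory.
Local Open Scope ring_scope.

Section Constr.
Variable t : nat.
Hypothesis ht : (0 < t)%N.
Local Notation n := (3 * t)%N.
Local Notation F := 'F_2.

Lemma n_gt0 : (0 < n)%N. Proof. by rewrite muln_gt0. Qed.
Definition i0 : 'I_n := Ordinal n_gt0.
Definition oo (q : nat) : 'I_n := insubd i0 q.
Lemma val_oo q : (q < n)%N -> val (oo q) = q.
Proof. by move=> h; rewrite /oo val_insubd h. Qed.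
Lemma oo_ord (i : 'I_n) : oo i = i.
Proof. by apply: val_inj; rewrite val_oo. Qed.

Definition e (i : 'I_n) : 'rV[F]_n := delta_mx 0 i.
Definition xp (s : 'S_n) (q : nat) := e (s (oo q)).
Definition sp (s : 'S_n) (a : nat) := \sum_(0 <= q < a) xp s q.

Lemma sp_ord (s : 'S_n) a : (a <= n)%N ->
  sp s a = \sum_(i : 'I_n | (i < a)%N) e (s i).
Proof.
move=> ha; rewrite /sp big_mkord (big_ord_widen n (fun q => xp s q) ha).
by apply: eq_bigr => i _; rewrite /xp oo_ord.
Qed.

Lemma sum_tperm_inv (f : 'I_n -> 'rV[F]_n) (u v : 'I_n) a :
  (u < a)%N -> (v < a)%N ->
  \sum_(i : 'I_n | (i < a)%N) f (tperm u v i) = \sum_(i : 'I_n | (i < a)%N) f i.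
Proof.
move=> hu hv.
rewrite [RHS](reindex_inj (h := tperm u v) (@perm_inj _ (tperm u v))).
apply: eq_bigl => i /=; case: tpermP => [->|->|] //; by rewrite ?hu ?hv.
Qed.


Definition TP := ('S_n * ('I_t.+1 * 'I_(2*t).+1))%type.
Definition TS := ('S_n * ('I_(2*t) * 'I_(2*t).+1))%type.
Definition TF := ('S_n * ('I_t * 'I_(2*t)))%type.
Definition Col := (TP + TS + TF)%type.

Definition cell (c : Col) (r : 'I_t) : 'rV[F]_n :=
  match c with
  | inl (inl (s, _)) => xp s r
  | inl (inr (s, _)) => if (r < t.-1)%N then xp s (t.+1 + r) else sp s t.+1
  | inr (s, _) => if (r < t.-1)%N then xp s ((2*t).+1 + r) else sp s (2*t).+1
  end.

Lemma t2_gt0 : (0 < 2 * t)%N. Proof. by rewrite muln_gt0. Qed.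
Definition o2 (q : nat) : 'I_(2*t) := insubd (Ordinal t2_gt0) q.

Definition pp (y : 'I_n) (s : 'S_n) : nat := (s^-1)%g y.

Definition sP y (s : 'S_n) (q : 'I_t.+1) : 'S_n :=
  (tperm (oo q) (oo t) * tperm (oo t) ((s^-1)%g y) * s)%g.
Definition sF y (s : 'S_n) (q : 'I_t) : 'S_n :=
  (tperm (oo (2*t + q)) (oo (2*t)) * tperm ((s^-1)%g y) (oo (2*t)) * s)%g.

Definition phiP y (s : 'S_n) (q : 'I_t.+1) (i2 : 'I_(2*t).+1) : Col :=
  inl (inr (sP y s q, (o2 (pp y s - t), i2))).
Definition phiF y (s : 'S_n) (q : 'I_t) (l2 : 'I_(2*t)) : Col :=
  inl (inr (sF y s q, (l2, inord (pp y s)))).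

Definition RS y (c : Col) : seq Col :=
  match c with
  | inl (inl (s, (q, i2))) => if (pp y s < t)%N then [:: c] else [:: c; phiP y s q i2]
  | inl (inr _) => [:: c]
  | inr (s, (q, l2)) => if ((2*t).+1 <= pp y s)%N then [:: c] else [:: c; phiF y s q l2]
  end.

Definition keep y (c : Col) : bool :=
  match c with inl (inr (s, _)) => (t.+1 <= pp y s < 2*t)%N | _ => true end.

Lemma sP_y y s q : sP y s q (oo q) = y.
Proof.
rewrite /sP !permM tpermL tpermL permKV //.
Qed.

Lemma sF_y y s q : sF y s q (oo (2*t + q)) = y.
Proof.
by rewrite /sF !permM tpermL tpermR permKV.
Qed.


Lemma tn : (t < n)%N. Proof. lia. Qed.

Lemma pp_sP y s q : pp y (sP y s q) = q.
Proof.
have h : (sP y s q)^-1%g y = oo q by apply: (canLR (permK _)); rewrite sP_y.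
rewrite /pp h val_oo //.
have := ltn_ord q; lia.
Qed.

Lemma pp_sF y s q : pp y (sF y s q) = (2 * t + q)%N.
Proof.
have h : (sF y s q)^-1%g y = oo (2 * t + q) by apply: (canLR (permK _)); rewrite sF_y.
rewrite /pp h val_oo //.
have := ltn_ord q; lia.
Qed.

Lemma sP_sum y s q : (t <= pp y s)%N -> sp (sP y s q) t.+1 = sp s t + e y.
Proof.
move=> hp.
have ht1 : (t.+1 <= n)%N by lia.
rewrite !sp_ord //; last lia.
set p := (s^-1)%g y.
have -> : \sum_(i : 'I_n | (i < t.+1)%N) e (sP y s q i) =
          \sum_(i : 'I_n | (i < t.+1)%N) e (s (tperm (oo t) p (tperm (oo q) (oo t) i))).
  by apply: eq_bigr => i _; rewrite /sP !permM.
rewrite (sum_tperm_inv (fun i => e (s (tperm (oo t) p i)))); first last.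
- by rewrite val_oo.
- by rewrite val_oo //; have := ltn_ord q; lia.
rewrite (bigD1 (oo t)) /=; last by rewrite val_oo.
rewrite tpermL /p permKV addrC; congr (_ + _).
have hot : nat_of_ord (oo t) = t by rewrite val_oo.
apply: eq_big => i.
  apply/andP/idP => [[h1 h2]|h].
    have : (i : nat) != t by apply: contra h2 => /eqP h; apply/eqP; apply: val_inj => /=; rewrite h val_oo.
    lia.
  split; first lia.
  apply/eqP => E; have := congr1 (@nat_of_ord _) E; rewrite hot; lia.
move=> /andP [h1 h2].
have hi : (i < t)%N.
  have : (i : nat) != t by apply: contra h2 => /eqP h; apply/eqP; apply: val_inj => /=; rewrite h val_oo.
  lia.
have h3 : oo t != i by rewrite eq_sym.
have h4 : p != i.
  apply/eqP => E; move: hp; rewrite /pp -/p E; lia.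
by rewrite tpermD.
Qed.


Lemma sp_split s : sp s t.+1 + \sum_(0 <= r < t.-1) xp s (t.+1 + r) = sp s (2*t).
Proof.
rewrite /sp [in RHS](big_cat_nat _ (n:=t.+1)) /=; [|lia|lia].
congr (_ + _).
rewrite -[in RHS](add0n t.+1) big_addn.
have -> : (2 * t - t.+1 = t.-1)%N by lia.
by apply: eq_bigr => i _; rewrite addnC.
Qed.

Lemma sF_sum y s q : (pp y s < (2*t).+1)%N -> sp (sF y s q) (2*t) + e y = sp s (2*t).+1.
Proof.
move=> hp.
rewrite !sp_ord; [|lia|lia].
set p := (s^-1)%g y.
have h2t : nat_of_ord (oo (2*t)) = (2*t)%N by rewrite val_oo //; lia.
have -> : \sum_(i : 'I_n | (i < 2*t)%N) e (sF y s q i) =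
          \sum_(i : 'I_n | (i < 2*t)%N) e (s (tperm p (oo (2*t)) i)).
  apply: eq_bigr => i hi; rewrite /sF !permM.
  rewrite (@tpermD _ _ _ i) //.
    apply/eqP => E; move: hi; rewrite -E val_oo //; have := ltn_ord q; lia.
  by apply/eqP => E; move: hi; rewrite -E h2t; lia.
rewrite -(sum_tperm_inv (fun i => e (s i)) p (oo (2*t)) (2*t).+1); first last.
- by rewrite h2t.
- exact: hp.
rewrite [in RHS](bigD1 (oo (2*t))) /=; last by rewrite h2t.
rewrite tpermR /p permKV addrC; congr (_ + _).
apply: eq_bigl => i.
apply/idP/andP => [h|[h1 h2]].
  split; first lia.
  apply/eqP => E; have := congr1 (@nat_of_ord _) E; rewrite h2t; lia.
have : (i : nat) != (2*t)%N by apply: contra h2 => /eqP h; apply/eqP; apply: val_inj => /=; rewrite h h2t.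
lia.
Qed.


Definition mcols := #|{: Col}|.
Definition code : array_code F t mcols n := fun r c => cell (enum_val c) r.

Definition Sset y (c : Col) : {set 'I_mcols} := [set c' : 'I_mcols | enum_val c' \in RS y c].

Lemma mem_cell y c d r : d \in RS y c -> cell d r \in col_span code (Sset y c).
Proof.
move=> hd; rewrite /col_span.
have -> : cell d r = code r (enum_rank d) by rewrite /code enum_rankK.
apply: memv_span; apply: allpairs_f; first by rewrite mem_enum.
by rewrite mem_enum inE enum_rankK.
Qed.

Lemma tl : (t.-1 < t)%N. Proof. lia. Qed.

Lemma xp_pp y s : xp s (pp y s) = e y.
Proof. by rewrite /xp /pp oo_ord permKV. Qed.

Lemma recover y c : keep y c -> e y \in col_span code (Sset y c).
Proof.
have Hc d r : d \in RS y c -> cell d r \in col_span code (Sset y c) := @mem_cell y c d r.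
case: c Hc => [[[s [q i2]]|[s j]]|[s [q l2]]] Hc hk; rewrite /RS /keep in Hc hk.
- case: ifP Hc => hp Hc.
    have -> : e y = cell (inl (inl (s, (q, i2)))) (Ordinal hp) by rewrite /= xp_pp.
    by apply: Hc; rewrite inE.
  have -> : e y = cell (phiP y s q i2) (Ordinal tl) - \sum_(r < t) cell (inl (inl (s, (q, i2)))) r.
    rewrite /= ltnn sP_sum; last lia.
    by rewrite /sp big_mkord addrC addKr.
  apply: memvB; first by apply: Hc; rewrite !inE eqxx orbT.
  by apply: memv_suml => r _; apply: Hc; rewrite in_cons eqxx.
- have hr : (pp y s - t.+1 < t)%N by lia.
  have -> : e y = cell (inl (inr (s, j))) (Ordinal hr).
    rewrite /= ifT; last lia.
    by rewrite subnKC ?xp_pp //; lia.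
  by apply: Hc; rewrite inE.
- case: ifP Hc => hp Hc.
    have hr : (pp y s - (2*t).+1 < t)%N by have := ltn_ord ((s^-1)%g y); rewrite /pp in hp *; lia.
    have -> : e y = cell (inr (s, (q, l2))) (Ordinal hr).
      rewrite /= ifT; last by have := ltn_ord ((s^-1)%g y); rewrite /pp in hp *; lia.
      by rewrite subnKC ?xp_pp //.
    by apply: Hc; rewrite inE.
  set d := phiF y s q l2.
  have -> : e y = cell (inr (s, (q, l2))) (Ordinal tl) - cell d (Ordinal tl)
                 - \sum_(r < t | (r < t.-1)%N) cell d r.
    rewrite /= ltnn.
    have -> : \sum_(r < t | (r < t.-1)%N) cell d r = \sum_(0 <= r < t.-1) xp (sF y s q) (t.+1 + r).
      rewrite big_mkord (big_ord_widen t (fun r => xp (sF y s q) (t.+1 + r))); last lia.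
      by apply: eq_bigr => r hr; rewrite /d /= hr.
    rewrite -(sF_sum y s q); last lia.
    rewrite -sp_split; set a := sp _ _; set b := \sum_(_ <= _ < _) _.
    by rewrite [a + b + _]addrAC [_ + b - a]addrAC addrK [a + _]addrC addrK.
  apply: memvB; first apply: memvB.
  + by apply: Hc; rewrite in_cons eqxx.
  + by apply: Hc; rewrite !inE eqxx orbT.
  by apply: memv_suml => r _; apply: Hc; rewrite !inE eqxx orbT.
Qed.


Lemma RS_cases y c d : d \in RS y c ->
  d = c \/
  (exists s q i2, c = inl (inl (s, (q, i2))) /\ (t <= pp y s)%N /\ d = phiP y s q i2) \/
  (exists s q l2, c = inr (s, (q, l2)) /\ (pp y s < (2*t).+1)%N /\ d = phiF y s q l2).
Proof.
case: c => [[[s [q i2]]|[s j]]|[s [q l2]]]; rewrite /RS.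
- case: ifP => hp.
    by rewrite inE => /eqP ->; left.
  rewrite !inE => /orP [/eqP->|/eqP->]; first by left.
  right; left; exists s, q, i2; split => //; split => //; lia.
- by rewrite inE => /eqP ->; left.
- case: ifP => hp.
    by rewrite inE => /eqP ->; left.
  rewrite !inE => /orP [/eqP->|/eqP->]; first by left.
  right; right; exists s, q, l2; split => //; split => //; lia.
Qed.


Lemma pp_lt y s : (pp y s < n)%N. Proof. exact: ltn_ord. Qed.

Lemma phiP_inj y s q i2 s' q' i2' : (t <= pp y s)%N -> (t <= pp y s')%N ->
  phiP y s q i2 = phiP y s' q' i2' -> s = s' /\ q = q' /\ i2 = i2'.
Proof.
rewrite /phiP => h h' [E1 E2 E3].
have hq : q = q' by apply: val_inj; rewrite /= -(pp_sP y s q) -(pp_sP y s' q') E1.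
have hp : pp y s = pp y s'.
  have := congr1 val E2; rewrite /o2 !val_insubd.
  have := pp_lt y s; have := pp_lt y s'.
  case: ifP; case: ifP => /= *; lia.
have hs1 : (s^-1)%g y = (s'^-1)%g y by apply: val_inj.
subst q'; rewrite /sP hs1 in E1.
by move/mulgI: E1 => ->.
Qed.

Lemma phiF_inj y s q l2 s' q' l2' : (pp y s < (2*t).+1)%N -> (pp y s' < (2*t).+1)%N ->
  phiF y s q l2 = phiF y s' q' l2' -> s = s' /\ q = q' /\ l2 = l2'.
Proof.
rewrite /phiF => h h' [E1 E2 E3].
have hq : q = q'.
  apply: val_inj => /=; have := pp_sF y s q; have := pp_sF y s' q'; rewrite E1; lia.
have hp : pp y s = pp y s'.
  by have := congr1 val E3; rewrite /= !inordK.
have hs1 : (s^-1)%g y = (s'^-1)%g y by apply: val_inj.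
subst q'; rewrite /sF hs1 in E1.
by move/mulgI: E1 => ->.
Qed.

Lemma RS_disj y c c' d : keep y c -> keep y c' -> c != c' ->
  d \in RS y c -> d \in RS y c' -> False.
Proof.
move=> k k' ne /RS_cases H /RS_cases H'.
have ppP s q i2 : pp y (sP y s q) = q := pp_sP y s q.
case: H => [E|[[s [q [i2 [Ec [hp Ed]]]]]|[s [q [l2 [Ec [hp Ed]]]]]]];
case: H' => [E'|[[s' [q' [i2' [Ec' [hp' Ed']]]]]|[s' [q' [l2' [Ec' [hp' Ed']]]]]]].
- by move: ne; rewrite -E -E' eqxx.
-
  move: k; rewrite -E Ed' /keep /phiP pp_sP; have := ltn_ord q'; lia.
- move: k; rewrite -E Ed' /keep /phiF pp_sF; lia.
- move: k'; rewrite -E' Ed /keep /phiP pp_sP; have := ltn_ord q; lia.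
- have [h1 [h2 h3]] := phiP_inj _ _ _ _ _ _ _ hp hp' (etrans (esym Ed) Ed').
  by move: ne; rewrite Ec Ec' h1 h2 h3 eqxx.
- have := congr1 (fun d => if d is inl (inr (s, _)) then pp y s else 0%N) (etrans (esym Ed) Ed').
  rewrite /= pp_sP pp_sF; have := ltn_ord q; lia.
- move: k'; rewrite -E' Ed /keep /phiF pp_sF; lia.
- have := congr1 (fun d => if d is inl (inr (s, _)) then pp y s else 0%N) (etrans (esym Ed) Ed').
  rewrite /= pp_sP pp_sF; have := ltn_ord q'; lia.
- have [h1 [h2 h3]] := phiF_inj _ _ _ _ _ _ _ hp hp' (etrans (esym Ed) Ed').
  by move: ne; rewrite Ec Ec' h1 h2 h3 eqxx.
Qed.


Lemma fib_le y (q q' : 'I_n) :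
  (#|[set s : 'S_n | (s^-1)%g y == q]| <= #|[set s : 'S_n | (s^-1)%g y == q']|)%N.
Proof.
rewrite -(card_imset _ (@mulgI _ (tperm q q'))).
apply: subset_leq_card; apply/subsetP => _ /imsetP [s hs ->].
rewrite !inE in hs *.
by rewrite invMg permM tpermV (eqP hs) tpermL.
Qed.

Lemma fib_card y (q : 'I_n) : #|[set s : 'S_n | (s^-1)%g y == q]| = (n.-1)`!.
Proof.
have Heq q1 q2 : #|[set s : 'S_n | (s^-1)%g y == q1]| = #|[set s : 'S_n | (s^-1)%g y == q2]|.
  by apply/eqP; rewrite eqn_leq !fib_le.
have : (\sum_(q1 : 'I_n) #|[set s : 'S_n | (s^-1)%g y == q1]| = n`!)%N.
  rewrite -card_Sn -[RHS]sum1_card (partition_big (fun s : 'S_n => (s^-1)%g y) xpredT) //=.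
  apply: eq_bigr => q1 _; rewrite -sum1_card.
  by apply: eq_bigl => s; rewrite inE.
rewrite (eq_bigr (fun _ => #|[set s : 'S_n | (s^-1)%g y == q]|)); last by move=> q1 _; rewrite (Heq q1 q).
rewrite sum_nat_const card_ord.
have hf : forall k, (0 < k)%N -> k`! = (k * k.-1`!)%N by case=> // k _; rewrite factS.
by rewrite (hf _ n_gt0) => /eqP; rewrite eqn_mul2l (gtn_eqF n_gt0) /= => /eqP.
Qed.


Lemma card_midq : #|[pred q : 'I_n | (t.+1 <= q < 2*t)%N]| = t.-1.
Proof.
rewrite -sum1_card.
have -> : (\sum_(q in [pred q : 'I_n | (t.+1 <= q < 2*t)%N]) 1 =
           \sum_(0 <= q < n | (t.+1 <= q < 2*t)%N) 1)%N by rewrite big_mkord.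
rewrite (big_cat_nat _ (n := t.+1)) //=; last lia.
rewrite (big_cat_nat _ (n := 2*t) (m := t.+1)) //=; [|lia|lia].
rewrite big_nat_cond big1 ?add0n; last by move=> i /and3P [/andP [? ?] ? ?]; lia.
rewrite [X in (_ + X)%N]big_nat_cond [X in (_ + X)%N]big1 ?addn0; last by move=> i /and3P [/andP [? ?] ? ?]; lia.
rewrite (@congr_big_nat _ _ _ t.+1 (2*t) t.+1 (2*t) _ xpredT (fun _ => 1%N) (fun _ => 1%N)) //.
  by rewrite sum_nat_const_nat; lia.
Qed.

Lemma card_mid y : #|[set s : 'S_n | (t.+1 <= pp y s < 2*t)%N]| = (t.-1 * (n.-1)`!)%N.
Proof.
rewrite -sum1_card (partition_big (fun s : 'S_n => (s^-1)%g y)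
   [pred q : 'I_n | (t.+1 <= q < 2*t)%N]) /=; last by move=> s; rewrite inE.
rewrite -card_midq -sum_nat_const.
apply: eq_bigr => q hq; rewrite -(fib_card y q) -sum1_card.
apply: eq_bigl => s; rewrite !inE /pp.
by case: eqP => [->|_]; [rewrite andbT | rewrite andbF].
Qed.


Definition kk := (n`! * (t.+1 * (2*t).+1) + (t.-1 * (n.-1)`!) * (2*t * (2*t).+1) + n`! * (t * (2*t)))%N.

Lemma card_Iy y : #|[set c : Col | keep y c]| = kk.
Proof.
rewrite -sum1_card.
rewrite (eq_bigl (fun c => keep y c)); last by move=> c; rewrite inE.
rewrite !big_sumType /= !sum1_card.
rewrite (@eq_card _ _ [set i : TS | (t < pp y i.1 < 2 * t)%N]); last by move=> -[s j]; rewrite inE.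
have -> : [set i : TS | (t < pp y i.1 < 2 * t)%N] =
          setX [set s : 'S_n | (t < pp y s < 2 * t)%N] [set: 'I_(2*t) * 'I_(2*t).+1].
  by apply/setP => -[s j]; rewrite !inE andbT.
rewrite cardsX card_mid cardsT /kk !card_prod !card_Sn !card_ord.
done.
Qed.


Lemma kPIR : is_kPIR kk code.
Proof.
move=> y.
have HK := card_Iy y.
exists (fun j : 'I_kk => Sset y (enum_val (cast_ord (esym HK) j))).
split.
- move=> j j' ne.
  rewrite disjoint_subset; apply/subsetP => c' h1; rewrite !inE in h1 *.
  apply/negP => h2.
  have k1 := enum_valP (cast_ord (esym HK) j).
  have k2 := enum_valP (cast_ord (esym HK) j').
  rewrite inE in k1; rewrite inE in k2.
  apply: (RS_disj _ _ _ _ k1 k2 _ h1 h2).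
  apply: contra ne => /eqP /enum_val_inj /cast_ord_inj ->; exact: eqxx.
- move=> j; apply: recover.
  by have := enum_valP (cast_ord (esym HK) j); rewrite inE.
Qed.

Lemma card_m : mcols = (n`! * (t.+1 * (2*t).+1 + 2*t * (2*t).+1 + t * (2*t)))%N.
Proof. by rewrite /mcols !card_sum !card_prod !card_Sn !card_ord !mulnDr. Qed.

End Constr.


Theorem theorem9 (t : nat) (ht : (0 < t)%N) :
  exists (F : finFieldType) (m k : nat) (C : array_code F t m (3 * t)),
    (0 < m)%N /\ is_kPIR k C /\
    ((16 * t ^ 2 + 7 * t + 1)%:R / (24 * t ^ 2 + 15 * t + 3)%:R : rat)
      <= k%:R / m%:R.
Proof.
exists 'F_2, (mcols t), (kk t), (code t ht).
have hf : ((3 * t)`! = 3 * t * (3 * t).-1`!)%N.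
  by have := n_gt0 t ht; case: (3 * t)%N => // k _; rewrite factS.
have hm : mcols t = ((3 * t).-1`! * (t * (24 * t ^ 2 + 15 * t + 3)))%N.
  rewrite card_m hf; move: ((3 * t).-1)`! => f; case: t ht {hf} => // t' _; rewrite !expnS expn0; lia.
have hk : kk t = ((3 * t).-1`! * (t * (16 * t ^ 2 + 7 * t + 1)))%N.
  rewrite /kk hf; move: ((3 * t).-1)`! => f; case: t ht {hf hm} => // t' _ /=; rewrite !expnS expn0; lia.
have hpos : (0 < (3 * t).-1`! * t)%N by rewrite muln_gt0 fact_gt0.
split; first by rewrite hm !muln_gt0 fact_gt0 ht addn_gt0 orbT.
split; first exact: (kPIR t ht).
rewrite hm hk !natrM -!mulf_div !divff ?mul1r //.
- by rewrite pnatr_eq0 -lt0n.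
- by rewrite pnatr_eq0 -lt0n fact_gt0.
Qed.
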